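(* Let $\mathcal{C}$ be a class of $\Sigma$-algebras. If $\dot\Sigma^*/{\dot\sim_{\mathcal{C}}}$ is finite, then $\mathbf{T}_{\le 1}/{\sim_{\mathcal{C}}}$ is finite.
   Context: $\Sigma$ is a finite algebraic signature and $V$ a non-empty finite set of variables; $\mathbf{T}$ is the set of $\Sigma$-terms over $V$. A $\Sigma$-algebra has a non-empty finite universe and an interpretation of each function symbol; $t \sim_{\mathcal{C}} s$ iff $t$ and $s$ evaluate equally under all valuations in all algebras in $\mathcal{C}$. $\mathrm{vo}(t)$ is the number of variable occurrences in $t$, and $\mathbf{T}_{\le k}=\{t\in\mathbf{T} : \mathrm{vo}(t)\le k\}$. $\dot\Sigma$ is the (possibly infinite) set of characters $f(t_1,\dots,t_{i-1},\_,t_{i+1},\dots,t_n)$ where $f\in\Sigma$ is $n$-ary, $i\in\{1,\dots,n\}$, and each $t_j$ ($j\ne i$) is a term with $\mathrm{vo}(t_j)=0$. For a word $w\in\dot\Sigma^*$ and a term $t$, $w[t]$ is defined by $\varepsilon[t] = t$ and $(f(t_1,\dots,\_,\dots,t_n)\,w')[t] = f(t_1,\dots,t_{i-1},w'[t],t_{i+1},\dots,t_n)$. The equivalence $\dot\sim_{\mathcal{C}}$ on $\dot\Sigma^*$ is: $w\ \dot\sim_{\mathcal{C}}\ w'$ iff $w[a]\sim_{\mathcal{C}} w'[a]$, where $a\in V$ is any variable. *)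

(* Defs.v *)
From mathcomp Require Import all_boot.
Set Implicit Arguments. Unset Strict Implicit. Unset Printing Implicit Defensive.

Section Terms.
Variables (F : finType) (ar : F -> nat) (V : finType).

Inductive term : Type :=
| Var : V -> term
| App : forall f : F, ('I_(ar f) -> term) -> term.

Fixpoint vo (t : term) : nat :=
  match t with
  | Var _ => 1
  | App f a => \sum_(i < ar f) vo (a i)
  end.

Record algebra : Type := Algebra {
  carrier : finType;
  carrier_inh : carrier;
  op : forall f : F, ('I_(ar f) -> carrier) -> carrier
}.

Fixpoint eval (A : algebra) (val : V -> carrier A) (t : term) : carrier A :=
  match t with
  | Var x => val x
  | App f a => @op A f (fun i => eval val (a i))
  end.

Definition teq (C : algebra -> Prop) (t s : term) : Prop :=
  forall A : algebra, C A -> forall val : V -> carrier A, eval val t = eval val s.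

(* A character f(t_1,..,t_{i-1},_,t_{i+1},..,t_n): the hole is at position
   ch_i; the argument ch_args ch_i is irrelevant (ignored by plugging);
   all other arguments are ground (vo = 0). *)
Record character : Type := Character {
  ch_f : F;
  ch_i : 'I_(ar ch_f);
  ch_args : 'I_(ar ch_f) -> term;
  ch_ground : forall j, j != ch_i -> vo (ch_args j) = 0
}.

Fixpoint plug (w : seq character) (t : term) : term :=
  match w with
  | [::] => t
  | c :: w' => @App (ch_f c) (fun j => if j == ch_i c then plug w' t else @ch_args c j)
  end.

Definition weq (C : algebra -> Prop) (w w' : seq character) : Prop :=
  forall a : V, teq C (plug w (Var a)) (plug w' (Var a)).

End Terms.

(* Main.v *)
Require Import Defs.
From mathcomp Require Import all_boot.
From Stdlib Require Import FunctionalExtensionality.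
Set Implicit Arguments. Unset Strict Implicit.

Section Aux.
Variables (F : finType) (ar : F -> nat) (V : finType).
Notation term := (term ar V).
Notation character := (character ar V).

Lemma ground_eval (A : algebra ar) (v1 v2 : V -> carrier A) (t : term) :
  vo t = 0 -> eval v1 t = eval v2 t.
Proof.
elim: t => [x|f a IH] //= H.
congr (op _); apply: functional_extensionality => i; apply: IH.
move/eqP: H; rewrite sum_nat_eq0 => /forallP /(_ i) /=.
by move/eqP.
Qed.

Lemma plug_eval (A : algebra ar) (v1 v2 : V -> carrier A) (w : seq character) t1 t2 :
  eval v1 t1 = eval v2 t2 -> eval v1 (plug w t1) = eval v2 (plug w t2).
Proof.
move=> E; elim: w => [|c w IH] //=.
congr (op _); apply: functional_extensionality => j.
case: eqP => [//|/eqP Hj]; apply: ground_eval; exact: ch_ground.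
Qed.

Lemma vo_plug (w : seq character) t : vo (plug w t) = vo t.
Proof.
elim: w => [|c w IH] //=.
rewrite (bigD1 (ch_i c)) //= eqxx IH big1 ?addn0 // => j Hj.
by rewrite (negbTE Hj); apply: ch_ground.
Qed.

Lemma weq_plug C (a : V) (w w' : seq character) t : weq C w w' -> teq C (plug w t) (plug w' t).
Proof.
move=> H A CA val.
pose v' := fun _ : V => eval val t.
have E : eval val t = eval v' (Var ar a) by [].
rewrite (plug_eval w E) (plug_eval w' E); exact: H.
Qed.

Lemma pick_i m (h : 'I_m -> nat) : 0 < m -> \sum_(i < m) h i <= 1 ->
  exists i, h i <= 1 /\ forall j, j != i -> h j = 0.
Proof.
move=> m0 S.
case: (pickP (fun i => h i != 0)) => [i Hi | H0].
  exists i; move: S; rewrite (bigD1 i) //=.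
  have : 0 < h i by rewrite lt0n.
  case: (h i) => [//|[|//]] _ /=; rewrite add1n ltnS leqn0 sum_nat_eq0 => /forallP Hf.
  split=> // j Hj; by move: (Hf j); rewrite Hj /= => /eqP.
exists (Ordinal m0); split.
  by move: (H0 (Ordinal m0)) => /= /negbFE /eqP ->.
by move=> j _; move: (H0 j) => /= /negbFE /eqP.
Qed.

Lemma decomp (v0 : V) (t : term) : vo t <= 1 ->
  (exists w x, t = plug w (Var ar x)) \/
  (exists w c, ar c = 0 /\ t = plug w (@App _ ar _ c (fun _ => Var ar v0))).
Proof.
elim: t => [x|f a IH] /= H.
  by left; exists [::], x.
case: (posnP (ar f)) => [E|P].
  right; exists [::], f; split=> //=; congr App.
  apply: functional_extensionality => i; have := ltn_ord i; by rewrite {2}E.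
have [i [Hi Hj]] := pick_i P H.
have G : forall j, j != i -> vo (a j) = 0 := Hj.
pose c := Character G.
have K : forall s w, a i = plug w s -> App a = plug (c :: w) s.
  move=> s w Hw /=; congr App; apply: functional_extensionality => j.
  by case: eqP => [->|].
case: (IH i Hi) => [[w [x Hw]]|[w [c' [Hc Hw]]]].
  by left; exists (c :: w), x; apply: K.
by right; exists (c :: w), c'; split=> //; apply: K.
Qed.

End Aux.

Theorem lemma2p11 (F : finType) (ar : F -> nat) (V : finType) (HV : 0 < #|V|)
  (C : algebra ar -> Prop) :
  (exists (n : nat) (r : 'I_n -> seq (character ar V)),
     forall w : seq (character ar V), exists i : 'I_n, weq C w (r i)) ->
  (exists (n : nat) (r : 'I_n -> term ar V),
     (forall i, vo (r i) <= 1) /\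
     forall t : term ar V, vo t <= 1 -> exists i : 'I_n, teq C t (r i)).
Proof.
move=> [n [r Hr]].
case/card_gt0P: HV => v0 _.
pose X : finType := (('I_n * V) + ('I_n * {c : F | ar c == 0}))%type.
pose rep (x : X) : term ar V := match x with
  | inl (k, y) => plug (r k) (Var ar y)
  | inr (k, c) => plug (r k) (@App _ ar _ (val c) (fun _ => Var ar v0)) end.
have Hvo : forall x, vo (rep x) <= 1.
  case=> [[k y]|[k c]]; rewrite /rep vo_plug //=.
  by rewrite sum_nat_const card_ord (eqP (valP c)).
exists #|X|, (fun i => rep (enum_val i)); split=> [i|t Ht]; first exact: Hvo.
have Hx : exists x : X, teq C t (rep x).
  case: (decomp v0 Ht) => [[w [x ->]]|[w [c [Hc ->]]]].
    have [k Hk] := Hr w; exists (inl (k, x)); exact: (@weq_plug F ar V C v0 w (r k) _ Hk).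
  have [k Hk] := Hr w; exists (inr (k, exist _ c (introT eqP Hc))).
  exact: (@weq_plug F ar V C v0 w (r k) _ Hk).
case: Hx => x Hx; exists (enum_rank x); by rewrite enum_rankK.
Qed.
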